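(* Let $\Omega\in\mathcal K_0$ be invertible and let $N\ge0$ be an integer. Then for $r=0,1,\dots,2N$, the $\mathcal K_0$-vector spaces ${\rm Hom}_{\mathcal{TLB}(q,\Omega)}((m,v^r),(m,v^{2N-r}))$ are all isomorphic to one another.
   Context: $\mathcal K_0=\mathbb C(q^{1/k})$, $q$ an indeterminate, with $q^{1/2}\in\mathcal K_0$. The Temperley–Lieb category of type $B$, $\mathcal{TLB}(q,\Omega)$, is the $\mathcal K_0$-linear category with objects $(m,v^r)$, $r\in\mathbb Z_{\ge0}$. A diagram $(m,v^r)\to(m,v^s)$ is drawn in a rectangle: a thick vertical strand (the pole) joins the left end of the bottom edge to the left end of the top edge; to its right there are $r$ points on the bottom edge and $s$ on the top edge, and thin unoriented strands consisting of arcs pairing these $r+s$ points and possibly closed loops; thin strands may cross each other and the pole, every crossing carrying over/under information. Diagrams are taken up to regular isotopy (planar isotopy, Reidemeister II and III moves, also involving the pole, and cancellation of two opposite curls on a thin strand). Composition is vertical concatenation, extended bilinearly. Morphisms are $\mathcal K_0$-linear combinations of diagrams modulo the following relations, imposed locally (i.e. anywhere inside a diagram): (1) $q^{1/2}X_+=q\,\|+E$ and $q^{-1/2}X_-=q^{-1}\|+E$, where $X_+$ is a crossing of two thin strands in which the strand from bottom-right to top-left passes over, $X_-$ the other crossing, $\|$ two parallel vertical thin strands and $E$ the diagram with the two bottom points joined by an arc and the two top points joined by an arc; (2) a closed thin loop with no crossings equals $-(q+q^{-1})$; (3) letting $L:(m,v)\to(m,v)$ be the diagram whose thin strand leaves the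 bottom, passes in front of the pole (lower crossing), winds around it and returns to the top passing behind the pole (upper crossing), one has $q\,L\circ L=(\Omega+\Omega^{-1})L-q^{-1}{\rm id}_{(m,v)}$; (4) a closed thin loop encircling the pole once, passing in front of the pole at its lower crossing and behind it at its upper crossing, may be removed at the cost of the factor $-(\Omega+\Omega^{-1})$. *)

(* Defs.v *)
(* Temperley-Lieb category of type B, TLB(q,Omega),
   presented by generating diagrams ("words") and local relations. *)
From HB Require Import structures.
From mathcomp Require Import all_boot all_algebra.
From mathcomp Require Import complex fraction Rstruct.

Set Implicit Arguments.
Unset Strict Implicit.
Unset Printing Implicit Defensive.

(* A horizontal slice of a diagram is a sequence
   of colours, read from left to right: [true] = the pole, [false] = a
   thin point.  Positions are 0-based from the left.
   - [Cup i]      : inserts a thin arc (two new thin points) at positions i,i+1;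
   - [Cap i]      : joins the (thin) points at positions i,i+1 by an arc;
   - [Cross b i]  : crossing of the strands at positions i,i+1;
                    [b = true]  is X_+ (the strand from bottom-right to
                    top-left passes over), [b = false] is X_-.
                    Either strand may be the pole.                     *)
Inductive gen := Cup of nat | Cap of nat | Cross of bool & nat.

Definition gen_code (g : gen) : nat * nat * bool :=
  match g with
  | Cup i => (0, i, false) | Cap i => (1, i, false) | Cross b i => (2, i, b)
  end%N.
Definition gen_decode (c : nat * nat * bool) : option gen :=
  match c with
  | (0, i, _) => Some (Cup i) | (1, i, _) => Some (Cap i)
  | (2, i, b) => Some (Cross b i) | _ => None
  end%N.
Lemma gen_codeK : pcancel gen_code gen_decode. Proof. by case. Qed.
HB.instance Definition _ := Equality.copy gen (pcan_type gen_codeK).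

(* A word is a vertical stacking of elementary diagrams, read from
   bottom (head of the list) to top. *)
Definition word := seq gen.

Definition gpos (g : gen) : nat :=
  match g with Cup i => i | Cap i => i | Cross _ i => i end.
Definition gsetpos (g : gen) (j : nat) : gen :=
  match g with Cup _ => Cup j | Cap _ => Cap j | Cross b _ => Cross b j end.
Definition gin (g : gen) : nat := match g with Cup _ => 0 | _ => 2 end%N.
Definition gout (g : gen) : nat := match g with Cap _ => 0 | _ => 2 end%N.

Definition gapp (g : gen) (s : seq bool) : option (seq bool) :=
  match g with
  | Cup i => if (i <= size s)%N
             then Some (take i s ++ [:: false; false] ++ drop i s) else None
  | Cap i => if [&& (i.+1 < size s)%N, ~~ nth true s i & ~~ nth true s i.+1]
             then Some (take i s ++ drop i.+2 s) else None
  | Cross _ i => if (i.+1 < size s)%N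
             then Some (take i s ++ [:: nth true s i.+1; nth true s i] ++ drop i.+2 s)
             else None
  end.

Definition wapp (w : word) (s : seq bool) : option (seq bool) :=
  foldl (fun o g => obind (gapp g) o) (Some s) w.

(* the object (m, v^r) *)
Definition obj (r : nat) : seq bool := true :: nseq r false.

Local Open Scope ring_scope.

Section TLB.
Variable K : fieldType.

(* formal K-linear combinations of words *)
Definition fsum := seq (K * word).
Definition coef (x : fsum) (w : word) : K := \sum_(p <- x | p.2 == w) p.1.
Definition fscale (c : K) (x : fsum) : fsum := [seq (c * p.1, p.2) | p <- x].
Definition fsub (x y : fsum) : fsum := x ++ fscale (-1) y.
Definition sandwich (u : word) (x : fsum) (v : word) : fsum :=
  [seq (p.1, u ++ p.2 ++ v) | p <- x].
Definition typed (s t : seq bool) (x : fsum) : Prop :=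
  forall p, p \in x -> wapp p.2 s = Some t.

Definition rcurl (b : bool) (i : nat) : word := [:: Cup i.+1; Cross b i; Cap i.+1].
Definition lcurl (b : bool) (i : nat) : word := [:: Cup i; Cross b i.+1; Cap i].
(* the diagram L : thin strand at i+1 winds around the pole at i,
   in front at the lower crossing, behind at the upper one *)
Definition Lw (i : nat) : word := [:: Cross true i; Cross true i].

Variables (qh Om : K).
Let q := qh ^+ 2.

(* Local relations lhs = rhs, valid in a slice s (the context s also
   carries the strands to the left and right of the local picture). *)
Inductive brel (s : seq bool) : fsum -> fsum -> Prop :=
  (* regular isotopy: planar isotopy ... *)
  | br_interchange g h : (gpos g + gout g <= gpos h)%N ->
      brel s [:: (1, [:: g; h])]
             [:: (1, [:: gsetpos h (gpos h + gin g - gout g)%N; g])]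
  | br_zig i : brel s [:: (1, [:: Cup i.+1; Cap i])] [:: (1, [::])]
  | br_zag i : brel s [:: (1, [:: Cup i; Cap i.+1])] [:: (1, [::])]
  | br_capslide b i : brel s [:: (1, [:: Cross b i.+1; Cap i])]
                             [:: (1, [:: Cross (~~ b) i; Cap i.+1])]
  | br_cupslide b i : brel s [:: (1, [:: Cup i; Cross b i.+1])]
                             [:: (1, [:: Cup i.+1; Cross (~~ b) i])]
  (* ... Reidemeister II and III (also involving the pole) ... *)
  | br_R2 b i : brel s [:: (1, [:: Cross b i; Cross (~~ b) i])] [:: (1, [::])]
  | br_R3 b i : brel s [:: (1, [:: Cross b i; Cross b i.+1; Cross b i])]
                       [:: (1, [:: Cross b i.+1; Cross b i; Cross b i.+1])]
  (* ... cancellation of two opposite curls on a thin strand *)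
  | br_curlRL b i : brel s [:: (1, rcurl b i ++ lcurl (~~ b) i)] [:: (1, [::])]
  | br_curlLR b i : brel s [:: (1, lcurl b i ++ rcurl (~~ b) i)] [:: (1, [::])]
  | br_skein_pos i : brel s [:: (qh, [:: Cross true i])]
                            [:: (q, [::]); (1, [:: Cap i; Cup i])]
  | br_skein_neg i : brel s [:: (qh^-1, [:: Cross false i])]
                            [:: (q^-1, [::]); (1, [:: Cap i; Cup i])]
  | br_loop i : brel s [:: (1, [:: Cup i; Cap i])] [:: (- (q + q^-1), [::])]
  | br_L i : nth false s i -> ~~ nth true s i.+1 ->
      brel s [:: (q, Lw i ++ Lw i)] [:: (Om + Om^-1, Lw i); (- q^-1, [::])]
  | br_poleloop i : nth false s i ->
      brel s [:: (1, [:: Cup i.+1] ++ Lw i ++ [:: Cap i.+1])]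
             [:: (- (Om + Om^-1), [::])].

Definition relator (s0 t0 : seq bool) (x : fsum) : Prop :=
  exists u v s t lhs rhs,
    [/\ wapp u s0 = Some s, brel s lhs rhs, typed s t (lhs ++ rhs),
        wapp v t = Some t0 & x = sandwich u (fsub lhs rhs) v].

Definition inRel (s0 t0 : seq bool) (x : fsum) : Prop :=
  exists rs : seq (K * fsum),
    (forall p, p \in rs -> relator s0 t0 p.2) /\
    coef x =1 coef (flatten [seq fscale p.1 p.2 | p <- rs]).

Definition fext (f : word -> fsum) (x : fsum) : fsum :=
  flatten [seq fscale p.1 (f p.2) | p <- x].

(* Hom(s,t) = (free K-space on diagrams s -> t) / (span of relators).
   Two such Hom spaces are isomorphic iff there are K-linear maps between
   the free spaces (given on basis diagrams) preserving the relation
   subspaces and inverse to each other modulo relations. *)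
Definition hom_iso (s1 t1 s2 t2 : seq bool) : Prop :=
  exists (phi psi : word -> fsum),
    [/\ forall w, wapp w s1 = Some t1 -> typed s2 t2 (phi w),
        forall w, wapp w s2 = Some t2 -> typed s1 t1 (psi w),
        forall x, typed s1 t1 x -> inRel s1 t1 x -> inRel s2 t2 (fext phi x)
      & forall x, typed s2 t2 x -> inRel s2 t2 x -> inRel s1 t1 (fext psi x)] /\
    [/\ forall w, wapp w s1 = Some t1 ->
          inRel s1 t1 (fsub (fext psi (phi w)) [:: (1, w)])
      & forall w, wapp w s2 = Some t2 ->
          inRel s2 t2 (fsub (fext phi (psi w)) [:: (1, w)])].

End TLB.

(* K0 = C(q^{1/k}) : rational functions in the indeterminate t = q^{1/k}
   over the complex numbers C = R[i]. *)
Definition K0 : fieldType := {fraction {poly (complex Rdefinitions.R)}}.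
Definition qroot : K0 := tofrac ('X : {poly (complex Rdefinitions.R)}).
(* q^{1/2} = t^{k/2} (k even, so that q^{1/2} lies in K0); q = t^k *)
Definition qhalf (k : nat) : K0 := qroot ^+ (k./2).

(* Main.v *)
Require Import Defs.
From mathcomp Require Import all_boot all_algebra.
From mathcomp Require Import ring zify.
From Stdlib Require Import Classical.
Set Implicit Arguments. Unset Strict Implicit. Unset Printing Implicit Defensive.
Import GRing.Theory.
Local Open Scope ring_scope.

Lemma coef_nil (K : fieldType) w : coef ([::] : fsum K) w = 0.
Proof. by rewrite /coef big_nil. Qed.

Lemma coef_cons (K : fieldType) (p : K * word) x w :
  coef (p :: x) w = (if p.2 == w then p.1 else 0) + coef x w.
Proof. by rewrite /coef big_cons; case: (p.2 == w); rewrite ?add0r. Qed.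

Lemma coef_cat (K : fieldType) (x y : fsum K) w : coef (x ++ y) w = coef x w + coef y w.
Proof. by rewrite /coef big_cat. Qed.

Lemma coef_fscale (K : fieldType) c (x : fsum K) w : coef (fscale c x) w = c * coef x w.
Proof.
elim: x => [|p x IH]; first by rewrite /= !coef_nil mulr0.
rewrite /= !coef_cons IH /=; case: (p.2 == w); ring.
Qed.

Lemma coef_fsub (K : fieldType) (x y : fsum K) w : coef (fsub x y) w = coef x w - coef y w.
Proof. by rewrite /fsub coef_cat coef_fscale mulN1r. Qed.

Lemma fext_cons (K : fieldType) f (p : K * word) x : fext f (p :: x) = fscale p.1 (f p.2) ++ fext f x.
Proof. by []. Qed.

Lemma fext_cat (K : fieldType) f (x y : fsum K) : fext f (x ++ y) = fext f x ++ fext f y.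
Proof. by rewrite /fext map_cat flatten_cat. Qed.

Lemma coef_fext (K : fieldType) f (x : fsum K) w :
  coef (fext f x) w = \sum_(p <- x) p.1 * coef (f p.2) w.
Proof.
elim: x => [|p x IH]; first by rewrite big_nil coef_nil.
by rewrite fext_cons coef_cat coef_fscale IH big_cons.
Qed.

Lemma coef_fext_scale (K : fieldType) f c (x : fsum K) w :
  coef (fext f (fscale c x)) w = c * coef (fext f x) w.
Proof.
rewrite !coef_fext big_map mulr_sumr; apply: eq_bigr => p _ /=; ring.
Qed.

Lemma fext_comp (K : fieldType) (f g : word -> fsum K) x w :
  coef (fext (fun w => fext f (g w)) x) w = coef (fext f (fext g x)) w.
Proof.
elim: x => [|p x IH]; first by [].
by rewrite !fext_cons fext_cat !coef_cat IH coef_fscale coef_fext_scale.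
Qed.

Lemma coef_flatten (K : fieldType) (rs : seq (K * fsum K)) w :
  coef (flatten [seq fscale p.1 p.2 | p <- rs]) w = \sum_(p <- rs) p.1 * coef p.2 w.
Proof.
elim: rs => [|p rs IH]; first by rewrite big_nil coef_nil.
by rewrite /= coef_cat coef_fscale IH big_cons.
Qed.

Section InRel.
End InRel.

Lemma inRel_coef (K : fieldType) (qh Om : K) s0 t0 (x y : fsum K) :
  (forall w, coef x w = coef y w) -> inRel qh Om s0 t0 y -> inRel qh Om s0 t0 x.
Proof. move=> e [rs [H1 H2]]; exists rs; split=> // w; by rewrite e H2. Qed.

Lemma inRel_nil (K : fieldType) (qh Om : K) s0 t0 : inRel qh Om s0 t0 [::].
Proof. by exists [::]; split. Qed.

Lemma inRel_cat (K : fieldType) (qh Om : K) s0 t0 (x y : fsum K) :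
  inRel qh Om s0 t0 x -> inRel qh Om s0 t0 y -> inRel qh Om s0 t0 (x ++ y).
Proof.
move=> [rs1 [H1 E1]] [rs2 [H2 E2]]; exists (rs1 ++ rs2); split.
  by move=> p; rewrite mem_cat => /orP [] ?; [apply: H1|apply: H2].
by move=> w; rewrite coef_cat E1 E2 map_cat flatten_cat coef_cat.
Qed.

Lemma inRel_scale (K : fieldType) (qh Om : K) s0 t0 c (x : fsum K) :
  inRel qh Om s0 t0 x -> inRel qh Om s0 t0 (fscale c x).
Proof.
move=> [rs [H1 E1]]; exists [seq (c * p.1, p.2) | p <- rs]; split.
  by move=> p /mapP [p' p'in ->]; exact: (H1 _ p'in).
move=> w; rewrite coef_fscale E1 !coef_flatten big_map mulr_sumr.
by apply: eq_bigr => p _ /=; rewrite mulrA.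
Qed.

Lemma inRel_rel (K : fieldType) (qh Om : K) s0 t0 (x : fsum K) :
  relator qh Om s0 t0 x -> inRel qh Om s0 t0 x.
Proof.
move=> H; exists [:: (1, x)]; split; first by move=> p; rewrite inE => /eqP ->.
by move=> w; rewrite /= cats0 coef_fscale mul1r.
Qed.

Definition Weq (K : fieldType) (qh Om : K) s0 t0 (a b : word) :=
  inRel qh Om s0 t0 [:: (1, a); (-1, b)].

Lemma Weq_refl (K : fieldType) (qh Om : K) s0 t0 a : Weq qh Om s0 t0 a a.
Proof.
apply: (inRel_coef (y := [::])); last exact: inRel_nil.
by move=> w; rewrite !coef_cons coef_nil /=; case: (a == w); rewrite ?addr0 ?subrr.
Qed.

Lemma Weq_sym (K : fieldType) (qh Om : K) s0 t0 a b :
  Weq qh Om s0 t0 a b -> Weq qh Om s0 t0 b a.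
Proof.
move=> H; apply: (inRel_coef (y := fscale (-1) [:: (1, a); (-1, b)])); last exact: inRel_scale.
move=> w; rewrite coef_fscale !coef_cons coef_nil /=.
by case: (a == w); case: (b == w); ring.
Qed.

Lemma Weq_trans (K : fieldType) (qh Om : K) s0 t0 a b c :
  Weq qh Om s0 t0 a b -> Weq qh Om s0 t0 b c -> Weq qh Om s0 t0 a c.
Proof.
move=> H1 H2; apply: (inRel_coef (y := [:: (1, a); (-1, b)] ++ [:: (1, b); (-1, c)])); last exact: inRel_cat.
move=> w; rewrite coef_cat !coef_cons coef_nil /=.
by case: (a == w); case: (b == w); case: (c == w); ring.
Qed.

Lemma foldl_none (w : word) :
  foldl (fun o g => obind (gapp g) o) None w = None.
Proof. by elim: w. Qed.

Lemma wapp_cons g w s :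
  wapp (g :: w) s = if gapp g s is Some s1 then wapp w s1 else None.
Proof. by rewrite /wapp /=; case: (gapp g s) => // ; rewrite foldl_none. Qed.

Lemma wapp_nil s : wapp [::] s = Some s.
Proof. by []. Qed.

Lemma wapp_cat w1 w2 s :
  wapp (w1 ++ w2) s = if wapp w1 s is Some s1 then wapp w2 s1 else None.
Proof.
elim: w1 s => [|g w1 IH] s //=.
rewrite !wapp_cons; case: (gapp g s) => // s1.
Qed.

Lemma dropl_cat' (T : Type) n (s1 s2 : seq T) : (n <= size s1)%N -> drop n (s1 ++ s2) = drop n s1 ++ s2.
Proof. elim: s1 n => [|x s1 IH] [|n] //=; first by case: s2. by move=> H; rewrite IH. Qed.

Lemma gapp_ext g s t e : gapp g s = Some t -> gapp g (s ++ e) = Some (t ++ e).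
Proof.
case: g => [i|i|b i] /=.
- case: ifP => // H [<-]; rewrite size_cat (leq_trans H (leq_addr _ _)).
  by rewrite takel_cat // dropl_cat' // -!catA.
- case: ifP => // /and3P [H1 H2 H3] [<-].
  rewrite size_cat !nth_cat (leq_trans H1 (leq_addr _ _)) H1 (ltnW H1) H2 H3 /=.
  by rewrite takel_cat ?dropl_cat' ?catA //; apply: ltnW; apply: ltnW.
- case: ifP => // H [<-].
  rewrite size_cat !nth_cat (leq_trans H (leq_addr _ _)) H (ltnW H) /=.
  by rewrite takel_cat ?dropl_cat' -?catA //; apply: ltnW; apply: ltnW.
Qed.

Lemma wapp_ext w s t e : wapp w s = Some t -> wapp w (s ++ e) = Some (t ++ e).
Proof.
elim: w s => [|g w IH] s; first by move=> [<-].
rewrite !wapp_cons; case E: (gapp g s) => [s1|] // H.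
by rewrite (gapp_ext _ E); apply: IH.
Qed.

Lemma gapp_size g s t : gapp g s = Some t ->
  (gpos g + gin g <= size s)%N /\ (size t + gin g = size s + gout g)%N.
Proof.
case: g => [i|i|b i] /=.
- case: ifP => // H [<-]; rewrite !size_cat /= size_takel // size_drop; split; [lia|]; by rewrite addn0 !addnS subnKC // addn0.
- case: ifP => // /and3P [H1 H2 H3] [<-]; rewrite !size_cat size_takel ?size_drop; first by split; lia.
  lia.
- case: ifP => // H [<-]; rewrite !size_cat /= size_takel ?size_drop; first by split; lia.
  lia.
Qed.

Lemma nth_ext_f s e i : nth false s i -> nth false (s ++ e) i.
Proof.
case: (ltnP i (size s)) => h; first by rewrite nth_cat h.
by rewrite nth_default.
Qed.

Lemma nth_ext_t s e i : ~~ nth true s i -> ~~ nth true (s ++ e) i.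
Proof.
case: (ltnP i (size s)) => h; first by rewrite nth_cat h.
by rewrite nth_default.
Qed.

Lemma brel_ext (K : fieldType) (qh Om : K) s e l r :
  brel qh Om s l r -> brel qh Om (s ++ e) l r.
Proof.
case=> [g h H|i|i|b i|b i|b i|b i|b i|b i|i|i|i|i H1 H2|i H].
- exact: br_interchange.
- exact: br_zig.
- exact: br_zag.
- exact: br_capslide.
- exact: br_cupslide.
- exact: br_R2.
- exact: br_R3.
- exact: br_curlRL.
- exact: br_curlLR.
- exact: br_skein_pos.
- exact: br_skein_neg.
- exact: br_loop.
- by apply: br_L; [apply: nth_ext_f | apply: nth_ext_t].
- by apply: br_poleloop; apply: nth_ext_f.
Qed.

Lemma typed_ext (K : fieldType) s t e (x : fsum K) : typed s t x -> typed (s ++ e) (t ++ e) x.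
Proof. by move=> H p /H; apply: wapp_ext. Qed.

Lemma Weq_step (K : fieldType) (qh Om : K) s0 t0 u v s t a b :
  wapp u s0 = Some s -> brel qh Om s [:: (1, a)] [:: (1, b)] ->
  wapp a s = Some t -> wapp b s = Some t -> wapp v t = Some t0 ->
  Weq qh Om s0 t0 (u ++ a ++ v) (u ++ b ++ v).
Proof.
move=> Hu Hb Ha Hb' Hv.
apply: (inRel_coef (y := sandwich u (fsub [:: (1, a)] [:: (1, b)]) v)).
  by move=> w; rewrite /= !coef_cons /= mulr1.
apply: inRel_rel; exists u, v, s, t, [:: (1, a)], [:: (1, b)]; split=> //.
by move=> p; rewrite !inE => /orP [] /eqP ->.
Qed.

Definition mapw (K : fieldType) (f : word -> word) (x : fsum K) : fsum K :=
  [seq (p.1, f p.2) | p <- x].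

Lemma coef_mapw_f (K : fieldType) f (x : fsum K) w0 : injective f ->
  coef (mapw f x) (f w0) = coef x w0.
Proof.
move=> fi; rewrite /coef big_map; apply: eq_bigl => p /=; exact: inj_eq.
Qed.

Lemma coef_mapw_0 (K : fieldType) f (x : fsum K) w :
  ~ (exists w0, f w0 = w) -> coef (mapw f x) w = 0.
Proof.
move=> Hn; rewrite /coef big_map big_pred0 // => p /=.
apply/negbTE/eqP => E; apply: Hn; by exists p.2.
Qed.

Lemma coef_mapw (K : fieldType) f (x y : fsum K) : injective f ->
  (forall w, coef x w = coef y w) -> forall w, coef (mapw f x) w = coef (mapw f y) w.
Proof.
move=> fi E w; case: (classic (exists w0, f w0 = w)) => [[w0 <-]|Hn].
  by rewrite !coef_mapw_f.
by rewrite !coef_mapw_0.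
Qed.

Lemma mapw_flatten (K : fieldType) f (rs : seq (K * fsum K)) :
  mapw f (flatten [seq fscale p.1 p.2 | p <- rs]) =
  flatten [seq fscale p.1 p.2 | p <- [seq (p.1, mapw f p.2) | p <- rs]].
Proof.
elim: rs => //= p rs IH; rewrite -IH /mapw map_cat; congr (_ ++ _).
by rewrite /fscale -!map_comp.
Qed.

Lemma inRel_mapw (K : fieldType) (qh Om : K) s0 t0 s1 t1 f (x : fsum K) : injective f ->
  (forall x, relator qh Om s0 t0 x -> relator qh Om s1 t1 (mapw f x)) ->
  inRel qh Om s0 t0 x -> inRel qh Om s1 t1 (mapw f x).
Proof.
move=> fi Hr [rs [H1 E1]]; exists [seq (p.1, mapw f p.2) | p <- rs]; split.
  by move=> p /mapP [p' p'in ->]; exact: (Hr _ (H1 _ p'in)).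
by rewrite -mapw_flatten; apply: coef_mapw.
Qed.

Lemma fext_single (K : fieldType) f (x : fsum K) :
  fext (fun w => [:: (1, f w)]) x = mapw f x.
Proof. by elim: x => //= p x IH; rewrite fext_cons IH /= mulr1. Qed.

Lemma typed_cat (K : fieldType) s t (x y : fsum K) : typed s t x -> typed s t y -> typed s t (x ++ y).
Proof. by move=> Hx Hy p; rewrite mem_cat => /orP [] ?; [apply: Hx|apply: Hy]. Qed.

Lemma typed_fscale (K : fieldType) s t c (x : fsum K) : typed s t x -> typed s t (fscale c x).
Proof. by move=> Hx p /mapP [q qin ->]; exact: (Hx _ qin). Qed.

Lemma typed_fext (K : fieldType) s t s' t' (f : word -> fsum K) x :
  (forall w, wapp w s = Some t -> typed s' t' (f w)) -> typed s t x -> typed s' t' (fext f x).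
Proof.
move=> Hf; elim: x => [|p x IH] Hx; first by [].
rewrite fext_cons; apply: typed_cat.
  by apply: typed_fscale; apply: Hf; apply: Hx; rewrite inE eqxx.
by apply: IH => q qin; apply: Hx; rewrite inE qin orbT.
Qed.

Lemma coef_fext_fsub (K : fieldType) f (x y : fsum K) w :
  coef (fext f (fsub x y)) w = coef (fext f x) w - coef (fext f y) w.
Proof. by rewrite /fsub fext_cat coef_cat coef_fext_scale mulN1r. Qed.

Lemma rel_comp (K : fieldType) (qh Om : K) s t (f g : word -> fsum K) y :
  (forall w, wapp w s = Some t -> inRel qh Om s t (fsub (fext g (f w)) [:: (1, w)])) ->
  typed s t y -> inRel qh Om s t (fsub (fext g (fext f y)) y).
Proof.
move=> H; elim: y => [|p y IH] Hy; first exact: inRel_nil.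
apply: (inRel_coef (y := fscale p.1 (fsub (fext g (f p.2)) [:: (1, p.2)]) ++
                         fsub (fext g (fext f y)) y)).
  move=> w; rewrite fext_cons fext_cat coef_fsub coef_cat coef_fext_scale coef_cons.
  rewrite coef_cat coef_fscale !coef_fsub coef_cons coef_nil /=.
  by case: (p.2 == w); ring.
apply: inRel_cat.
  by apply: inRel_scale; apply: H; apply: Hy; rewrite inE eqxx.
by apply: IH => q qin; apply: Hy; rewrite inE qin orbT.
Qed.

Lemma hom_iso_trans (K : fieldType) (qh Om : K) s1 t1 s2 t2 s3 t3 :
  hom_iso qh Om s1 t1 s2 t2 -> hom_iso qh Om s2 t2 s3 t3 -> hom_iso qh Om s1 t1 s3 t3.
Proof.
move=> [phi1 [psi1 [[A1 B1 C1 D1] [E1 F1]]]] [phi2 [psi2 [[A2 B2 C2 D2] [E2 F2]]]].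
exists (fun w => fext phi2 (phi1 w)), (fun w => fext psi1 (psi2 w)); split; split.
- by move=> w Hw; apply: (typed_fext A2); apply: A1.
- by move=> w Hw; apply: (typed_fext B1); apply: B2.
- move=> x Tx Rx; apply: (inRel_coef (y := fext phi2 (fext phi1 x))); first exact: fext_comp.
  by apply: C2; [apply: (typed_fext A1) | apply: C1].
- move=> x Tx Rx; apply: (inRel_coef (y := fext psi1 (fext psi2 x))); first exact: fext_comp.
  by apply: D1; [apply: (typed_fext B2) | apply: D2].
- move=> w Hw; have Ty := A1 w Hw; set y := phi1 w.
  apply: (inRel_coef (y := fext psi1 (fsub (fext psi2 (fext phi2 y)) y) ++
                           fsub (fext psi1 y) [:: (1, w)])).
    by move=> w'; rewrite coef_fsub fext_comp coef_cat coef_fext_fsub coef_fsub; ring.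
  apply: inRel_cat; last exact: E1.
  apply: D1; last exact: rel_comp.
  apply: typed_cat; last exact: typed_fscale.
  by apply: (typed_fext B2); apply: (typed_fext A2).
- move=> w Hw; have Ty := B2 w Hw; set y := psi2 w.
  apply: (inRel_coef (y := fext phi2 (fsub (fext phi1 (fext psi1 y)) y) ++
                           fsub (fext phi2 y) [:: (1, w)])).
    by move=> w'; rewrite coef_fsub fext_comp coef_cat coef_fext_fsub coef_fsub; ring.
  apply: inRel_cat; last exact: F2.
  apply: C2; last exact: rel_comp.
  apply: typed_cat; last exact: typed_fscale.
  by apply: (typed_fext A1); apply: (typed_fext B1).
Qed.

Lemma hom_iso_sym (K : fieldType) (qh Om : K) s1 t1 s2 t2 :
  hom_iso qh Om s1 t1 s2 t2 -> hom_iso qh Om s2 t2 s1 t1.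
Proof.
move=> [phi [psi [[A B C D] [E F]]]]; by exists psi, phi.
Qed.

Notation FF := [:: false; false].

Lemma gapp_cup_end s : gapp (Cup (size s)) s = Some (s ++ FF).
Proof. by rewrite /= leqnn take_size drop_size. Qed.

Lemma gapp_cap_end s : gapp (Cap (size s)) (s ++ FF) = Some s.
Proof.
rewrite /= size_cat /= !nth_cat ltnn subnn addn2 ltnSn ltnNge leqnSn subSnn /=.
by rewrite take_size_cat // drop_oversize ?cats0 // size_cat /= addn2.
Qed.

Lemma wapp1 g s : wapp [:: g] s = gapp g s.
Proof. by rewrite wapp_cons; case: (gapp g s). Qed.

Lemma cup_slide (K : fieldType) (qh Om : K) s0 t0 w : forall s t u v,
  wapp w s = Some t -> wapp u s0 = Some s -> wapp v (t ++ FF) = Some t0 ->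
  Weq qh Om s0 t0 (u ++ Cup (size s) :: w ++ v) (u ++ w ++ Cup (size t) :: v).
Proof.
elim: w => [|g w IH] s t u v Hw Hu Hv.
  by case: Hw => <-; apply: Weq_refl.
move: Hw; rewrite wapp_cons; case E: (gapp g s) => [s1|] // Hw.
have [Hp Hs] := gapp_size E.
have Hu' : wapp (rcons u g) s0 = Some s1 by rewrite -cats1 wapp_cat Hu wapp1.
apply: (Weq_trans (b := rcons u g ++ Cup (size s1) :: w ++ v)); last first.
  by have := IH s1 t (rcons u g) v Hw Hu' Hv; rewrite -cats1 -!catA.
rewrite -cats1 -catA.
have -> : u ++ Cup (size s) :: g :: w ++ v = u ++ [:: Cup (size s); g] ++ (w ++ v) by [].
have -> : [:: g] ++ Cup (size s1) :: w ++ v = [:: g; Cup (size s1)] ++ (w ++ v) by [].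
apply: Weq_sym; apply: (@Weq_step _ _ _ _ _ _ _ s (s1 ++ FF)).
- exact: Hu.
- have := @br_interchange _ qh Om s g (Cup (size s1)).
  rewrite /= (_ : (size s1 + gin g - gout g)%N = size s); last by lia.
  by apply; lia.
- by rewrite wapp_cons E wapp1 gapp_cup_end.
- by rewrite wapp_cons gapp_cup_end wapp1 (gapp_ext _ E).
- by rewrite wapp_cat (wapp_ext _ Hw).
Qed.

Lemma cap_slide (K : fieldType) (qh Om : K) s0 t0 w : forall s t u v,
  wapp w s = Some t -> wapp u s0 = Some (s ++ FF) -> wapp v t = Some t0 ->
  Weq qh Om s0 t0 (u ++ w ++ Cap (size t) :: v) (u ++ Cap (size s) :: w ++ v).
Proof.
elim: w => [|g w IH] s t u v Hw Hu Hv.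
  by case: Hw => <-; apply: Weq_refl.
move: Hw; rewrite wapp_cons; case E: (gapp g s) => [s1|] // Hw.
have [Hp Hs] := gapp_size E.
have Hu' : wapp (rcons u g) s0 = Some (s1 ++ FF) by rewrite -cats1 wapp_cat Hu wapp1 (gapp_ext _ E).
apply: (Weq_trans (b := rcons u g ++ Cap (size s1) :: w ++ v)).
  by have := IH s1 t (rcons u g) v Hw Hu' Hv; rewrite -cats1 -!catA.
rewrite -cats1 -catA.
have -> : u ++ Cap (size s) :: g :: w ++ v = u ++ [:: Cap (size s); g] ++ (w ++ v) by [].
have -> : [:: g] ++ Cap (size s1) :: w ++ v = [:: g; Cap (size s1)] ++ (w ++ v) by [].
apply: (@Weq_step _ _ _ _ _ _ _ (s ++ FF) s1).
- exact: Hu.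
- have := @br_interchange _ qh Om (s ++ FF) g (Cap (size s1)).
  rewrite /= (_ : (size s1 + gin g - gout g)%N = size s); last by lia.
  by apply; lia.
- by rewrite wapp_cons (gapp_ext _ E) wapp1 gapp_cap_end.
- by rewrite wapp_cons gapp_cap_end wapp1 E.
- by rewrite wapp_cat Hw.
Qed.

Lemma nseq_r n : nseq n.+1 false = nseq n false ++ [:: false].
Proof. by elim: n => //= n ->. Qed.

Lemma obj_S n : obj n.+1 = obj n ++ [:: false].
Proof. by rewrite /obj nseq_r. Qed.

Lemma obj_SS n : obj n ++ FF = obj n.+1 ++ [:: false].
Proof. by rewrite obj_S -catA. Qed.

Lemma hom_iso_refl (K : fieldType) (qh Om : K) s t : hom_iso qh Om s t s t.
Proof.
have fid : forall x : fsum K, fext (fun w => [:: (1, w)]) x = x.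
  by elim=> //= p x IH; rewrite fext_cons IH /= mulr1; case: p.
exists (fun w => [:: (1, w)]), (fun w => [:: (1, w)]); split; split.
- by move=> w Hw p; rewrite inE => /eqP ->.
- by move=> w Hw p; rewrite inE => /eqP ->.
- by move=> x _ Rx; rewrite fid.
- by move=> x _ Rx; rewrite fid.
- move=> w _; rewrite fid; apply: (inRel_coef (y := [::])); last exact: inRel_nil.
  by move=> w'; rewrite coef_fsub coef_nil; apply/eqP; rewrite subr_eq0.
- move=> w _; rewrite fid; apply: (inRel_coef (y := [::])); last exact: inRel_nil.
  by move=> w'; rewrite coef_fsub coef_nil; apply/eqP; rewrite subr_eq0.
Qed.

Lemma fext_one (K : fieldType) (f : word -> fsum K) w : fext f [:: (1, w)] = fscale 1 (f w).
Proof. by rewrite fext_cons cats0. Qed.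

Lemma Weq_inRel (K : fieldType) (qh Om : K) s0 t0 (f : word -> word) a w :
  Weq qh Om s0 t0 (f a) w ->
  inRel qh Om s0 t0 (fsub (fext (fun w => [:: (1, f w)]) [:: (1, a)]) [:: (1, w)]).
Proof.
move=> H; apply: (inRel_coef (y := [:: (1, f a); (-1, w)])) => // w'.
rewrite coef_fsub fext_one coef_fscale !coef_cons !coef_nil /=.
by case: (f a == w'); case: (w == w'); ring.
Qed.

Lemma step_iso (K : fieldType) (qh Om : K) r M :
  hom_iso qh Om (obj r) (obj M.+1) (obj r.+1) (obj M).
Proof.
set cm := Cap (size (obj M)); set cr := Cup (size (obj r)).
have Hcm : forall e, wapp [:: cm] (obj M.+1 ++ FF ++ e) = Some (obj M.+1 ++ e).
  move=> e; rewrite wapp1 obj_S -!catA /=.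
  have := gapp_ext ([:: false] ++ e) (gapp_cap_end (obj M)).
  by rewrite -catA.
have Hcm0 : wapp [:: cm] (obj M.+1 ++ [:: false]) = Some (obj M).
  by rewrite wapp1 obj_S -catA gapp_cap_end.
have Hcr : forall e, wapp [:: cr] (obj r ++ e) = Some (obj r.+1 ++ [:: false] ++ e).
  move=> e; rewrite wapp1 (gapp_ext _ (gapp_cup_end _)) obj_S -!catA //.
exists (fun w => [:: (1, rcons w cm)]), (fun w => [:: (1, cr :: w)]); split; split.
- move=> w Hw p; rewrite inE => /eqP -> /=.
  by rewrite -cats1 wapp_cat obj_S (wapp_ext _ Hw).
- move=> w Hw p; rewrite inE => /eqP -> /=.
  have := Hcr [::]; rewrite cats0 wapp1 => H.
  by rewrite wapp_cons H (wapp_ext _ Hw) -obj_S.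
- move=> x _ Rx; rewrite (fext_single (fun w => rcons w cm)).
  apply: inRel_mapw Rx; first exact: rcons_injl.
  move=> y [u [v [s [t [l [rr [Hu Hb Ht Hv ->]]]]]]].
  exists u, (rcons v cm), (s ++ [:: false]), (t ++ [:: false]), l, rr; split.
  + by rewrite obj_S (wapp_ext _ Hu).
  + exact: brel_ext.
  + exact: typed_ext.
  + by rewrite -cats1 wapp_cat (wapp_ext _ Hv).
  + by rewrite /mapw /sandwich -map_comp; apply: eq_map => p /=; rewrite !rcons_cat.
- move=> x _ Rx; rewrite (fext_single (cons cr)).
  apply: inRel_mapw Rx; first by move=> a b [].
  move=> y [u [v [s [t [l [rr [Hu Hb Ht Hv ->]]]]]]].
  exists (cr :: u), v, (s ++ [:: false]), (t ++ [:: false]), l, rr; split.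
  + have := Hcr [::]; rewrite cats0 wapp1 => H.
    by rewrite wapp_cons H (wapp_ext _ Hu).
  + exact: brel_ext.
  + exact: typed_ext.
  + by rewrite (wapp_ext _ Hv) -obj_S.
  + by rewrite /mapw /sandwich -map_comp.
- move=> w Hw; apply: (Weq_inRel (f := fun w => cr :: w)) => /=.
  apply: (Weq_trans (b := w ++ [:: Cup (size (obj M.+1)); cm])).
    have := @cup_slide _ qh Om (obj r) (obj M.+1) w (obj r) (obj M.+1) [::] [:: cm] Hw erefl.
    rewrite /= cats1; apply.
    by have := Hcm [::]; rewrite !cats0.
  have := @Weq_step _ qh Om (obj r) (obj M.+1) w [::] (obj M.+1) (obj M.+1)
     [:: Cup (size (obj M.+1)); cm] [::] Hw.
  rewrite !cats0; apply => //.
  + by rewrite /cm obj_S size_cat addn1; apply: br_zig.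
  + by rewrite wapp_cons gapp_cup_end -(cats0 FF) Hcm cats0.
- move=> w Hw; apply: (Weq_inRel (f := fun w => rcons w cm)) => /=.
  have Hu : wapp [:: cr] (obj r.+1) = Some (obj r.+1 ++ FF).
    by rewrite {1}obj_S Hcr.
  have := @cap_slide _ qh Om (obj r.+1) (obj M) w (obj r.+1) (obj M) [:: cr] [::] Hw Hu erefl.
  rewrite /= cats0 -cats1 => H; apply: (Weq_trans H).
  have := @Weq_step _ qh Om (obj r.+1) (obj M) [::] w (obj r.+1) (obj r.+1)
     [:: cr; Cap (size (obj r.+1))] [::] erefl.
  rewrite /=; apply => //.
  + by rewrite /cr /=; apply: br_zag.
  + rewrite wapp_cons; move: Hu; rewrite wapp1 => ->.
    by rewrite wapp1 (_ : (size (nseq r false)).+2 = size (obj r.+1)) ?gapp_cap_end.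
Qed.

Lemma iso0 (K : fieldType) (qh Om : K) N r : (r <= N.*2)%N ->
  hom_iso qh Om (obj r) (obj (N.*2 - r)) (obj 0) (obj (N.*2 - 0)).
Proof.
elim: r => [|r IH] H; first exact: hom_iso_refl.
apply: (hom_iso_trans _ (IH (ltnW H))).
have e : (N.*2 - r = (N.*2 - r.+1).+1)%N by lia.
rewrite e; apply: hom_iso_sym; exact: step_iso.
Qed.

Theorem lemma3p23 (k : nat) (k_gt0 : (0 < k)%N) (k_even : ~~ odd k)
  (Om : K0) (Om_unit : Om != 0%R) (N r1 r2 : nat) :
  (r1 <= N.*2)%N -> (r2 <= N.*2)%N ->
  hom_iso (qhalf k) Om (obj r1) (obj (N.*2 - r1)) (obj r2) (obj (N.*2 - r2)).
Proof.
move=> H1 H2; apply: (hom_iso_trans (iso0 _ _ H1)).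
exact: hom_iso_sym (iso0 _ _ H2).
Qed.
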